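(* Let $(G,\{1\},N\setminus\{1\})$ be a Stackelberg game with the single leader $1$. Then $\mathbf{X}^{SCE}=\mathbf{X}^{SCE\text{-}PA}=\mathbf{X}^{SCE\text{-}PAPE}$, and for every $\mathbf{x}=[x_\pi]\in\mathbf{X}^{SCE}$, the distribution $x_\varnothing$ maximizes $u_1$ over $\mathcal{X}^{CE}_{N\setminus\{1\}}$ (i.e. $x_\varnothing$ is an optimal correlated strategy to commit to).
   Context: A finite game is $G=(N,\{S_p\}_{p\in N},\{u_p\}_{p\in N})$ with players $N=\{1,\dots,n\}$, finite nonempty strategy sets $S_p$, and utilities $u_p:S\to\mathbb{R}$ on $S=\prod_{p\in N}S_p$; write $s=(s_p,s_{-p})$ with $s_{-p}\in S_{-p}=\prod_{q\neq p}S_q$. $\mathcal{X}=\Delta(S)$ is the set of probability distributions on $S$ and $u_p(x)=\sum_{s\in S}x(s)u_p(s)$ for $x\in\mathcal{X}$. For $P\subseteq N$, $\mathcal{X}^{CE}_P$ is the set of $x\in\mathcal{X}$ such that for every $p\in P$ and all $s_p\neq s_p'\in S_p$: $\sum_{s_{-p}\in S_{-p}} x(s_p,s_{-p})\,(u_p(s_p,s_{-p})-u_p(s_p',s_{-p}))\ge 0$; $\mathcal{X}^{CE}=\mathcal{X}^{CE}_N$ is the set of correlated equilibria of $G$. A Stackelberg game (SG) is a triple $(G,L,F)$ with $L\cup F=N$ and $L\cap F=\emptyset$ (leaders and followers). For $P\subseteq N$, $\Pi_P$ is the set of ordered subsets of $P$ (finite sequences of pairwise distinct elements of $P$, including the empty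 sequence $\varnothing$); for $\pi\in\Pi_P$ and $p\in P$ not occurring in $\pi$, $\pi p$ is $\pi$ with $p$ appended; when used as a set, $\pi$ means its set of entries. $\mathbf{X}=\prod_{\pi\in\Pi_L}\mathcal{X}^{CE}_{\pi\cup F}$, with elements $\mathbf{x}=[x_\pi]_{\pi\in\Pi_L}$. For $\mathbf{x}\in\mathbf{X}$ and $\pi\in\Pi_L$, $x_\pi$ is stable if $u_p(x_\pi)\ge u_p(x_{\pi p})$ for all $p\in L\setminus\pi$; $\mathbf{x}$ is stable if $x_\varnothing$ is stable, and perfectly stable if $x_\pi$ is stable for every $\pi\in\Pi_L$; $\mathbf{X}^{S}$ and $\mathbf{X}^{PS}$ denote the sets of stable and perfectly stable elements of $\mathbf{X}$. For $\mathbf{X}'\subseteq\mathbf{X}$ and $\pi\in\Pi_L$, $\mathcal{P}_{L\setminus\pi}(\mathbf{X}')$ is the set of Pareto optimal elements of $\{x'_\pi:\mathbf{x}'\in\mathbf{X}'\}$ with respect to the objectives $u_p$, $p\in L\setminus\pi$ (an element $y$ of the set is Pareto optimal if no $y'$ in the set satisfies $u_p(y')\ge u_p(y)$ for all $p\in L\setminus\pi$ with strict inequality for some such $p$). $\mathbf{x}\in\mathbf{X}$ is an SCE if $\mathbf{x}\in\mathbf{X}^S$ and $x_\varnothing\in\mathcal{P}_L(\mathbf{X}^S)$; an SCE-PA if $\mathbf{x}\in\mathbf{X}^{PS}$ and $x_\varnothing\in\mathcal{P}_L(\mathbf{X}^{PS})$; an SCE-PAPE if $\mathbf{x}\in\mathbf{X}^{PS}$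 and $x_\pi\in\mathcal{P}_{L\setminus\pi}(\mathbf{X}^{PS})$ for every $\pi\in\Pi_L$. The corresponding sets are $\mathbf{X}^{SCE}$, $\mathbf{X}^{SCE\text{-}PA}$, $\mathbf{X}^{SCE\text{-}PAPE}$. *)

(* Defs.v *)
(* Utilities take values in an arbitrary realFieldType R
   (in particular the reals); everything in the statement is order-algebraic. *)
From HB Require Import structures.
From mathcomp Require Import all_boot all_order all_algebra.
Set Implicit Arguments. Unset Strict Implicit. Unset Printing Implicit Defensive.
Import Order.TTheory GRing.Theory Num.Theory.
Local Open Scope ring_scope.

Section Game.
Variables (R : realFieldType) (n : nat) (S : 'I_n -> finType).

Definition sprofile := {dffun forall p : 'I_n, S p}.

Definition upd (s : sprofile) (p : 'I_n) (b : S p) : sprofile :=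
  [ffun q => dfwith (fun q => s q) b q].

Variable u : 'I_n -> sprofile -> R.

Definition is_dist (x : {ffun sprofile -> R}) : Prop :=
  (forall s, 0 <= x s) /\ \sum_(s : sprofile) x s = 1.

Definition U (p : 'I_n) (x : {ffun sprofile -> R}) : R :=
  \sum_(s : sprofile) x s * u p s.

Definition CE (P : {set 'I_n}) (x : {ffun sprofile -> R}) : Prop :=
  is_dist x /\
  forall p, p \in P -> forall a b : S p, a != b ->
    0 <= \sum_(s : sprofile | s p == a) x s * (u p s - u p (upd s b)).

Variable L : {set 'I_n}.
Definition F : {set 'I_n} := ~: L.

(* Pi_L : ordered subsets of L (duplicate-free sequences of elements of L) *)
Definition ordsub (pi : seq 'I_n) : bool := uniq pi && all (mem L) pi.

(* A family [x_pi]_pi is represented by a function on all sequences; only its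
   values on ordered subsets of L are ever used. *)
Definition sfamily := seq 'I_n -> {ffun sprofile -> R}.

Definition inX (xx : sfamily) : Prop :=
  forall pi, ordsub pi -> CE ([set p in pi] :|: F) (xx pi).

Definition stable_at (xx : sfamily) (pi : seq 'I_n) : Prop :=
  forall p, p \in L -> p \notin pi -> U p (xx (rcons pi p)) <= U p (xx pi).

Definition stableX (xx : sfamily) : Prop := inX xx /\ stable_at xx [::].
Definition pstableX (xx : sfamily) : Prop :=
  inX xx /\ forall pi, ordsub pi -> stable_at xx pi.

Definition pareto (X' : sfamily -> Prop) (pi : seq 'I_n)
    (y : {ffun sprofile -> R}) : Prop :=
  (exists2 x', X' x' & x' pi = y) /\
  ~ (exists2 x', X' x' &
       (forall p, p \in L -> p \notin pi -> U p y <= U p (x' pi)) /\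
       (exists p, [/\ p \in L, p \notin pi & U p y < U p (x' pi)])).

Definition SCE (xx : sfamily) : Prop :=
  stableX xx /\ pareto stableX [::] (xx [::]).
Definition SCE_PA (xx : sfamily) : Prop :=
  pstableX xx /\ pareto pstableX [::] (xx [::]).
Definition SCE_PAPE (xx : sfamily) : Prop :=
  pstableX xx /\ forall pi, ordsub pi -> pareto pstableX pi (xx pi).

End Game.

(* Main.v *)
Require Import Defs.
From HB Require Import structures.
From mathcomp Require Import all_boot all_order all_algebra.
Import Order.TTheory GRing.Theory Num.Theory.
Local Open Scope ring_scope.

Section H.
Variables (R : realFieldType) (n : nat) (S : 'I_n.+1 -> finType)
  (u : 'I_n.+1 -> sprofile S -> R).

Lemma pareto_ext (X1 X2 : sfamily R S -> Prop) pi y :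
  (forall x, X1 x <-> X2 x) ->
  pareto u [set ord0] X1 pi y -> pareto u [set ord0] X2 pi y.
Proof.
move=> E [[x' Hx Hy] Hn]; split.
  by exists x' => //; apply/E.
move=> [x'' Hx'' H]; apply: Hn; exists x'' => //; exact/E.
Qed.

Lemma nonempty_vac (xx : sfamily R S) pi : ordsub [set ord0] pi -> pi != [::] ->
  stable_at u [set ord0] xx pi.
Proof.
case: pi => [//|a t] /andP [_ /andP [Ha _]] _ p Hp Hpn.
exfalso; move: Hpn; rewrite in_cons.
move: Ha Hp; rewrite /= !inE => /eqP -> /eqP ->.
by rewrite eqxx.
Qed.

Lemma stab_iff (xx : sfamily R S) :
  stableX u [set ord0] xx <-> pstableX u [set ord0] xx.
Proof.
split.
  move=> [Hi Hs]; split => // pi Hpi.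
  have [->//|ne] := eqVneq pi [::].
  exact: nonempty_vac.
by move=> [Hi Hs]; split => //; apply: Hs.
Qed.

End H.

(* Players are 'I_n.+1 (0-indexed); the single leader "1" is ord0. *)
Theorem theorem2 (R : realFieldType) (n : nat) (S : 'I_n.+1 -> finType)
    (S_nonempty : forall p, (0 < #|S p|)%N)
    (u : 'I_n.+1 -> sprofile S -> R) :
  (forall xx : sfamily R S,
     (SCE u [set ord0] xx <-> SCE_PA u [set ord0] xx) /\
     (SCE_PA u [set ord0] xx <-> SCE_PAPE u [set ord0] xx)) /\
  (forall xx : sfamily R S, SCE u [set ord0] xx ->
     forall y, CE u (~: [set ord0]) y -> U u ord0 y <= U u ord0 (xx [::])).
Proof.
split.
  move=> xx; split; split.
  - move=> [Hs Hp]; split; first exact/stab_iff.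
    by apply: pareto_ext Hp => x; apply: stab_iff.
  - move=> [Hs Hp]; split; first exact/stab_iff.
    by apply: pareto_ext Hp => x; split => /stab_iff.
  - move=> [Hs Hp]; split => // pi Hpi.
    have [->//|ne] := eqVneq pi [::].
    split; first by exists xx.
    move=> [x' _ [_ [p [Hp1 Hp2 _]]]].
    case: pi Hpi ne Hp2 => [//|a t] /andP [_ /andP [Ha _]] _.
    move: Ha Hp1; rewrite /= !inE => /eqP -> /eqP ->.
    by rewrite eqxx.
  - by move=> [Hs Hp]; split => //; apply: Hp.
move=> xx [[Hi Hs] [_ Hn]] y Hy.
rewrite leNgt; apply/negP => Hlt; apply: Hn.
pose x' : sfamily R S := fun pi => if pi == [::] then y else xx pi.
exists x'.
  split.
    move=> pi Hpi; rewrite /x'; case: eqP => [->|_]; last exact: Hi.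
    suff -> : [set p in [::]] :|: F [set ord0] = ~: [set ord0] :> {set 'I_n.+1} by [].
    by apply/setP => p; rewrite /F !inE.
  move=> p Hp Hpn; rewrite /x' /=.
  apply: le_trans (Hs p Hp Hpn) _.
  by move: Hp; rewrite inE => /eqP ->; apply: ltW.
split.
  move=> p Hp _; rewrite /x' /=.
  by move: Hp; rewrite inE => /eqP ->; apply: ltW.
by exists ord0; split => //; rewrite inE.
Qed.
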